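(* Let $(A,\to,1)$ be any algebra of type $(2,0)$. Then (i) if $(A,\to,1)$ satisfies (M) and (BB), it satisfies (B); (ii) if $(A,\to,1)$ satisfies (M) and (B), it satisfies ( ** ).
   Context: Properties, required for all $x,y,z\in A$: (M) $1\to x=x$; (B) $(y\to z)\to((x\to y)\to(x\to z))=1$; (BB) $(y\to z)\to((z\to x)\to(y\to x))=1$; ( ** ) $y\to z=1$ implies $(z\to x)\to(y\to x)=1$. *)

(* Defs.v *)
Definition prop_M {A : Type} (imp : A -> A -> A) (one : A) : Prop :=
  forall x : A, imp one x = x.

Definition prop_B {A : Type} (imp : A -> A -> A) (one : A) : Prop :=
  forall x y z : A, imp (imp y z) (imp (imp x y) (imp x z)) = one.

Definition prop_BB {A : Type} (imp : A -> A -> A) (one : A) : Prop :=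
  forall x y z : A, imp (imp y z) (imp (imp z x) (imp y x)) = one.

Definition prop_SS {A : Type} (imp : A -> A -> A) (one : A) : Prop :=
  forall x y z : A, imp y z = one -> imp (imp z x) (imp y x) = one.

(* Main.v *)
Require Import Defs.

Theorem theorem2p6 (A : Type) (imp : A -> A -> A) (one : A) :
  (prop_M imp one -> prop_BB imp one -> prop_B imp one) /\
  (prop_M imp one -> prop_B imp one -> prop_SS imp one).
Proof.
  split.
  - intros HM HBB.
    assert (SS : forall x y z, imp y z = one -> imp (imp z x) (imp y x) = one).
    { intros x y z H. pose proof (HBB x y z) as E. rewrite H, HM in E. exact E. }
    assert (TR : forall a b c, imp a b = one -> imp b c = one -> imp a c = one).
    { intros a b c H1 H2. pose proof (HBB c a b) as E.
      rewrite H1, HM, H2, HM in E. exact E. }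
    assert (L1 : forall v w, imp v (imp (imp v w) w) = one).
    { intros v w. pose proof (HBB w one v) as E. rewrite !HM in E. exact E. }
    assert (EX : forall u v w, imp u (imp v w) = one -> imp v (imp u w) = one).
    { intros u v w H. apply (TR _ _ _ (L1 v w)). apply SS. exact H. }
    intros x y z. apply EX. apply HBB.
  - intros HM HB x y z H. pose proof (HB x y z) as E.
    pose proof (HB y z x) as E2. rewrite H, HM in E2. exact E2.
Qed.
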